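(* For all positive integers $\ell,k$, $$\det\left(f(\ell i - 1, x, qs)^j \big(-f(\ell i, x, s)\big)^{k-j}\right)_{i,j=0}^k = \det\left(f(\ell i, x, s)^j f(\ell i - 1, x, qs)^{k-j}\right)_{i,j=0}^k$$ $$= (-1)^{\binom{k+1}{3} \ell}\, s^{-\binom{k+1}{2} + \binom{k+1}{3} \ell}\, q^{\binom{k+1}{3} \binom{\ell}{2} + \binom{k+1}{4} \ell^2} \prod_{j=0}^{k-1} \mathrm{fac}(k-j, x, q^{\ell j} s, \ell).$$
   Context: Let $x,s,q$ be indeterminates; all quantities live in the field of rational functions in $x,s,q$. The Carlitz $q$-Fibonacci polynomials $f(n,x,s)$ are defined by $f(0,x,s)=0$, $f(1,x,s)=1$ and $f(n, x, s) = x f(n-1, x, s) + q^{n-2} s f(n-2, x, s)$; this recurrence is required to hold for all $n\in\mathbb{Z}$, which uniquely extends $f(n,x,s)$ to negative $n$ (e.g. $f(-1,x,s)=1/(q^{-1}s)$ times appropriate terms as determined by the recurrence). Here $f(n,x,q^a s)$ means $f(n,x,s)$ with $s$ replaced by $q^a s$. For positive integers $r,m$ define $\mathrm{fac}(r,x,s,m)=\prod_{i=1}^r f(im,x,s)$. *)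

(* Defs.v *)
From mathcomp Require Import all_boot all_order all_algebra.
Set Implicit Arguments. Unset Strict Implicit. Unset Printing Implicit Defensive.
Import GRing.Theory Num.Theory.
Local Open Scope ring_scope.

Section Carlitz.
Variable F : fieldType.

(* fpair x s q n = (f(n), f(n+1)) for n >= 0, using
   f(n+2) = x f(n+1) + q^n s f(n). *)
Fixpoint fpair (x s q : F) (n : nat) : F * F :=
  match n with
  | 0 => (0, 1)
  | n'.+1 => let: (a, b) := fpair x s q n' in (b, x * b + q ^+ n' * s * a)
  end.

(* bpair x s q m = (f(-m), f(-m+1)) for m >= 0, obtained by running the
   recurrence backwards: f(-m-1) = (f(-m+1) - x f(-m)) * q^(m+1) / s. *)
Fixpoint bpair (x s q : F) (m : nat) : F * F :=
  match m with
  | 0 => (0, 1)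
  | m'.+1 => let: (a, b) := bpair x s q m' in ((b - x * a) * q ^+ m'.+1 / s, a)
  end.

(* The Carlitz q-Fibonacci polynomial f(n, x, s) for n : int
   (the parameter q is passed explicitly as the first argument). *)
Definition cfib (q x s : F) (n : int) : F :=
  match n with
  | Posz k => (fpair x s q k).1
  | Negz k => (bpair x s q k.+1).1   (* Negz k = -(k+1) *)
  end.

Definition cfac (q x s : F) (r m : nat) : F :=
  \prod_(1 <= i < r.+1) cfib q x s (i * m)%N.

End Carlitz.

(* Main.v *)
Require Import Defs.
From mathcomp Require Import all_boot all_order all_algebra.
From mathcomp Require Import ring zify.
Import GRing.Theory Num.Theory.
Set Implicit Arguments. Unset Strict Implicit. Unset Printing Implicit Defensive.

Lemma bin2D a b : 'C(a + b, 2) = 'C(a, 2) + a * b + 'C(b, 2).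
Proof.
rewrite -binomial.Vandermonde !big_ord_recr big_ord0 /= !subn0 subnn !bin0 !bin1.
rewrite add0n; ring.
Qed.

Lemma bin2M l i : 'C(l * i, 2) = l ^ 2 * 'C(i, 2) + 'C(l, 2) * i.
Proof.
elim: i => [|i IH]; first by rewrite muln0 !muln0 addn0.
rewrite mulnS addnC bin2D IH binS bin1; rewrite !expnS expn0 muln1; nia.
Qed.

Lemma sumT (g : nat -> nat) k :
  \sum_(i < k.+2) g i * (k.+1 - i) = \sum_(i < k.+1) g i * (k - i) + \sum_(i < k.+1) g i.
Proof.
rewrite big_ord_recr /= subnn muln0 addn0 -big_split /=.
apply: eq_bigr => i _; rewrite subSn; [exact: mulnSr | by rewrite -ltnS].
Qed.

Lemma sumC2 k : \sum_(i < k.+1) 'C(i, 2) = 'C(k.+1, 3).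
Proof.
elim: k => [|k IH]; first by rewrite big_ord1.
by rewrite big_ord_recr /= IH [in RHS]binS addnC.
Qed.

Lemma sumI k : \sum_(i < k.+1) i = 'C(k.+1, 2).
Proof. rewrite -(big_mkord xpredT (fun i => i)). exact: bin2_sum. Qed.

Lemma S1 l k : \sum_(i < k.+1) l * i * (k - i) = 'C(k.+1, 3) * l.
Proof.
elim: k => [|k IH]; first by rewrite big_ord1 subnn muln0 (@bin_small 1 3).
rewrite (sumT (fun i => l * i)) IH -big_distrr /= sumI [in RHS]binS; nia.
Qed.

Lemma S2 k : \sum_(i < k.+1) (k - i) = 'C(k.+1, 2).
Proof.
elim: k => [|k IH]; first by rewrite big_ord1 (@bin_small 1 2).
have := sumT (fun _ => 1) k; rewrite /=.
under eq_bigr do rewrite mul1n. under [X in _ = X + _]eq_bigr do rewrite mul1n.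
move=> ->; rewrite IH sum1_card card_ord [in RHS]binS bin1 //.
Qed.

Lemma S3 l k : \sum_(i < k.+1) 'C(l * i, 2) * (k - i)
   = 'C(k.+1, 3) * 'C(l, 2) + 'C(k.+1, 4) * l ^ 2.
Proof.
elim: k => [|k IH]; first by rewrite big_ord1 subnn muln0 (@bin_small 1 3) // (@bin_small 1 4).
rewrite (sumT (fun i => 'C(l * i, 2))) IH.
under eq_bigr do rewrite bin2M.
rewrite big_split /= -!big_distrr /= sumC2 sumI !(binS k.+1); nia.
Qed.

Local Open Scope ring_scope.
Lemma prod_pairs (R : comNzRingType) (a : nat -> R) (n : nat) :
  \prod_(i < n) \prod_(j < n | (i < j)%N) (a i * a j) = \prod_(i < n) a i ^+ n.-1.
Proof.
elim: n => [|n IH]; first by rewrite !big_ord0.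
rewrite big_ord_recr /= [X in _ * X]big1 /=; last by move=> j; rewrite ltnNge -ltnS ltn_ord.

rewrite mulr1.
under eq_bigr => i _ do rewrite (big_mkcond (fun j : 'I_n.+1 => (i < j)%N)) big_ord_recr /= ltn_ord -big_mkcond /=.
rewrite big_split /= IH big_split /= prodr_const card_ord big_ord_recr /=.
case: n {IH} => [|n] /=; first by rewrite !big_ord0 !mul1r.

by rewrite mulrA -big_split /=; congr (_ * _); apply: eq_bigr => i _; rewrite exprS mulrC.
Qed.

Lemma hvdm_nz (K : fieldType) (a b : nat -> K) (m : nat) :
  (forall i, (i <= m)%N -> a i != 0) ->
  \det (\matrix_(i < m.+1, j < m.+1) (b i ^+ j * a i ^+ (m - j)))
  = \prod_(i < m.+1) \prod_(j < m.+1 | (i < j)%N) (a i * b j - a j * b i).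
Proof.
move=> anz.
pose c : 'rV[K]_m.+1 := \row_i (b i / a i).
have -> : \matrix_(i < m.+1, j < m.+1) (b i ^+ j * a i ^+ (m - j))
   = diag_mx (\row_(i < m.+1) a i ^+ m) *m (Vandermonde m.+1 c)^T.
  rewrite mul_diag_mx; apply/matrixP => i j; rewrite !mxE.
  have hi := anz i (ltn_ord i); have hj : (j <= m)%N by rewrite -ltnS.
  rewrite expr_div_n; have -> : a i ^+ m = a i ^+ (m - j) * a i ^+ j by rewrite -exprD subnK.
  field.
  by rewrite expf_neq0.
rewrite det_mulmx det_diag det_tr det_Vandermonde.
under eq_bigr do rewrite mxE.
rewrite -(prod_pairs a m.+1) -big_split /=; apply: eq_bigr => i _.
rewrite -big_split /=; apply: eq_bigr => j _; rewrite !mxE.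
have hi := anz i (ltn_ord i); have hj := anz j (ltn_ord j).
move: hi hj; clear; move: (a i) (a j) (b i) (b j) => u v w z hu hv.
by field; rewrite hu hv.
Qed.

Lemma hvdm (F : fieldType) (a b : nat -> F) (m : nat) :
  \det (\matrix_(i < m.+1, j < m.+1) (b i ^+ j * a i ^+ (m - j)))
  = \prod_(i < m.+1) \prod_(j < m.+1 | (i < j)%N) (a i * b j - a j * b i).
Proof.
pose A i : {poly F} := (a i)%:P + 'X.
pose B i : {poly F} := (b i)%:P.
pose MP := \matrix_(i < m.+1, j < m.+1) (B i ^+ j * A i ^+ (m - j)).
have HP : \det MP = \prod_(i < m.+1) \prod_(j < m.+1 | (i < j)%N) (A i * B j - A j * B i).
  apply/eqP; rewrite -tofrac_eq; apply/eqP.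
  rewrite -det_map_mx rmorph_prod.
  have -> : map_mx (@FracField.tofrac _) MP = \matrix_(i < m.+1, j < m.+1)
       ((fun i => FracField.tofrac (B i)) i ^+ j * (fun i => FracField.tofrac (A i)) i ^+ (m - j)).
    by apply/matrixP => i j; rewrite !mxE rmorphM !rmorphXn.
  rewrite (@hvdm_nz _ (fun i => FracField.tofrac (A i)) (fun i => FracField.tofrac (B i))).
    apply: eq_bigr => i _; rewrite rmorph_prod; apply: eq_bigr => j _.
    by rewrite rmorphB !rmorphM.
  move=> i _; rewrite tofrac_eq0; apply/eqP => H; have := congr1 (fun p : {poly F} => p`_1) H.
  by rewrite /A coefD coefC coefX /= add0r coef0; apply/eqP; rewrite oner_eq0.
have := congr1 (horner_eval 0) HP.
rewrite -det_map_mx rmorph_prod.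
have -> : map_mx (horner_eval 0) MP = \matrix_(i < m.+1, j < m.+1) (b i ^+ j * a i ^+ (m - j)).
  apply/matrixP => i j; rewrite !mxE /horner_eval /=.
  by rewrite hornerM !horner_exp /A /B hornerD !hornerC hornerX addr0.
move=> ->; apply: eq_bigr => i _; rewrite rmorph_prod; apply: eq_bigr => j _.
by rewrite rmorphB !rmorphM /= /horner_eval /A /B !(hornerD, hornerC, hornerX) !addr0.
Qed.

Definition ff (F : fieldType) (q x s : F) n := (fpair x s q n).1.

Lemma fpair2 (F : fieldType) (q x s : F) n : (fpair x s q n).2 = ff q x s n.+1.
Proof. by rewrite /ff /=; case: (fpair x s q n). Qed.

Lemma frec (F : fieldType) (q x s : F) n :
  ff q x s n.+2 = x * ff q x s n.+1 + q ^+ n * s * ff q x s n.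
Proof.
rewrite {1}/ff /= -fpair2 /ff /=; case E: (fpair x s q n) => [a b] /=.
by rewrite -[b]/((a, b).2) -[a]/((a, b).1) -E fpair2.
Qed.

Definition hh (F : fieldType) (q x s : F) n :=
  if n is m.+1 then ff q x (q * s) m else s^-1.

Lemma hrec (F : fieldType) (q x s : F) n : s != 0 ->
  hh q x s n.+2 = x * hh q x s n.+1 + q ^+ n * s * hh q x s n.
Proof.
move=> hs; case: n => [|n] /=.
  by rewrite /ff /= mulr0 add0r expr0 mul1r divff.
rewrite frec exprS; ring.
Qed.

Lemma gensol (F : fieldType) (q x c : F) (v : nat -> F) :
  v 0%N = 0 -> (forall t, v t.+2 = x * v t.+1 + q ^+ t * c * v t) ->
  forall t, v t = v 1%N * ff q x c t.
Proof.
move=> v0 vr t.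
suff : v t = v 1%N * ff q x c t /\ v t.+1 = v 1%N * ff q x c t.+1 by case.
elim: t => [|t [IH1 IH2]].
  by rewrite v0 /ff /= mulr0 mulr1.
split=> //; rewrite vr frec IH1 IH2; ring.
Qed.

Definition WW (F : fieldType) (q x s : F) m :=
  hh q x s m * ff q x s m.+1 - hh q x s m.+1 * ff q x s m.

Lemma WWform (F : fieldType) (q x s : F) m : s != 0 ->
  WW q x s m = (-1) ^+ m * s ^+ m / s * q ^+ 'C(m, 2).
Proof.
move=> hs; elim: m => [|m IH].
  by rewrite /WW /hh /ff /= mulr1 mulr0 subr0 !expr0 !mul1r mulr1.
have -> : WW q x s m.+1 = - (q ^+ m * s) * WW q x s m.
  rewrite /WW frec hrec //; ring.
rewrite IH binS bin1 exprD !exprS; ring.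
Qed.

Lemma key (F : fieldType) (q x s : F) m t : s != 0 ->
  hh q x s m * ff q x s (m + t) - hh q x s (m + t) * ff q x s m
  = WW q x s m * ff q x (q ^+ m * s) t.
Proof.
move=> hs.
pose v t := hh q x s m * ff q x s (m + t) - hh q x s (m + t) * ff q x s m.
have -> : WW q x s m = v 1%N by rewrite /v addn1.
apply: (gensol (v := v)); first by rewrite /v addn0 subrr.
move=> u; rewrite /v !addnS frec hrec // exprD; ring.
Qed.

Theorem lemma3 (F : fieldType) (x s q : F) (hs : s != 0) (hq : q != 0)
    (l k : nat) (hl : (0 < l)%N) (hk : (0 < k)%N) :
  \det (\matrix_(i < k.+1, j < k.+1)
          (cfib q x (q * s) ((l * i)%N%:Z - 1) ^+ j
           * (- cfib q x s (l * i)%N) ^+ (k - j)))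
  = \det (\matrix_(i < k.+1, j < k.+1)
          (cfib q x s (l * i)%N ^+ j
           * cfib q x (q * s) ((l * i)%N%:Z - 1) ^+ (k - j)))
  /\
  \det (\matrix_(i < k.+1, j < k.+1)
          (cfib q x s (l * i)%N ^+ j
           * cfib q x (q * s) ((l * i)%N%:Z - 1) ^+ (k - j)))
  = (-1) ^+ ('C(k.+1, 3) * l)
    * s ^ (('C(k.+1, 3) * l)%N%:Z - ('C(k.+1, 2))%:Z)
    * q ^+ ('C(k.+1, 3) * 'C(l, 2) + 'C(k.+1, 4) * l ^ 2)
    * \prod_(j < k) cfac q x (q ^+ (l * j) * s) (k - j) l.
Proof.
have Ea : forall n, cfib q x (q * s) (n%:Z - 1) = hh q x s n.
  case=> [|n].
    have -> : (0%:Z - 1 = Negz 0)%R by [].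
    rewrite /cfib /= mulr0 subr0 mul1r expr1; field.
    by rewrite hq hs.
  by rewrite -predn_int.
pose a i := hh q x s (l * i).
pose b i := ff q x s (l * i).
have E1 : \matrix_(i < k.+1, j < k.+1)
          (cfib q x (q * s) ((l * i)%N%:Z - 1) ^+ j
           * (- cfib q x s (l * i)%N) ^+ (k - j))
   = \matrix_(i < k.+1, j < k.+1) (a i ^+ j * (- b i) ^+ (k - j)).
  by apply/matrixP => i j; rewrite !mxE Ea.
have E2 : \matrix_(i < k.+1, j < k.+1)
          (cfib q x s (l * i)%N ^+ j
           * cfib q x (q * s) ((l * i)%N%:Z - 1) ^+ (k - j))
   = \matrix_(i < k.+1, j < k.+1) (b i ^+ j * a i ^+ (k - j)).
  by apply/matrixP => i j; rewrite !mxE Ea.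
have HP1 : \det (\matrix_(i < k.+1, j < k.+1) (a i ^+ j * (- b i) ^+ (k - j)))
   = \prod_(i < k.+1) \prod_(j < k.+1 | (i < j)%N) (a i * b j - a j * b i).
  rewrite (hvdm (fun i => - b i) a k); apply: eq_bigr => i _.
  apply: eq_bigr => j _; ring.
have HP2 : \det (\matrix_(i < k.+1, j < k.+1) (b i ^+ j * a i ^+ (k - j)))
   = \prod_(i < k.+1) \prod_(j < k.+1 | (i < j)%N) (a i * b j - a j * b i).
  exact: hvdm.
rewrite E1 E2 HP1 HP2; split=> //.
have inner : forall i : 'I_k.+1,
    \prod_(j < k.+1 | (i < j)%N) (a i * b j - a j * b i)
    = WW q x s (l * i) ^+ (k - i) * cfac q x (q ^+ (l * i) * s) (k - i) l.
  move=> i.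
  rewrite (eq_bigr (fun j : 'I_k.+1 =>
     WW q x s (l * i) * ff q x (q ^+ (l * i) * s) (l * (j - i)))); last first.
    move=> j hij; rewrite /a /b.
    have -> : (l * j = l * i + l * (j - i))%N by rewrite -mulnDr subnKC // ltnW.
    exact: key.
  rewrite (eq_bigl (fun j : 'I_k.+1 => xpredT j && (i.+1 <= j)%N)) //.
  rewrite -(big_geq_mkord i.+1 k.+1 xpredT
     (fun j => WW q x s (l * i) * ff q x (q ^+ (l * i) * s) (l * (j - i)))).
  have -> : i.+1 = (1 + i)%N by [].
  rewrite big_addn.
  under eq_bigr do rewrite addnK.
  have hik : (i <= k)%N by rewrite -ltnS.
  rewrite big_split /= prodr_const_nat subSn // subn1 /=.
  congr (_ * _); rewrite /cfac; apply: eq_bigr => r _; by rewrite [(r * l)%N]mulnC.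
rewrite (eq_bigr _ (fun i _ => inner i)) big_split /=.
rewrite [X in _ * X]big_ord_recr /= subnn.
have -> : cfac q x (q ^+ (l * k) * s) 0 l = 1 by rewrite /cfac big_geq.
rewrite mulr1; congr (_ * _).
have Wp : forall i : 'I_k.+1, WW q x s (l * i) ^+ (k - i)
   = (-1) ^+ (l * i * (k - i)) * s ^+ (l * i * (k - i)) * s^-1 ^+ (k - i)
     * q ^+ ('C(l * i, 2) * (k - i)).
  by move=> i; rewrite WWform // !exprMn !exprM.
rewrite (eq_bigr _ (fun i _ => Wp i)) !big_split /= !prodrXr S1 S2 S3.
rewrite expfzDr // -exprz_inv -!mulrA.
done.
Qed.
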